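(* Let $n\ge0$. For all $i,j\in\{1,\dots,\widetilde\mu_n\}$, the $(i,j)$-entry of $\chi^{(n)}$ is $$\chi^{(n)}_{i,j}=\frac{1}{d_n}\sum_{a=1}^{d_n}p_n\!\left(\mathbf{e}\!\left[\frac{a}{d_n}\right]\right)\mathbf{e}\!\left[\frac{a}{d_n}(i-j)\right].$$
   Context: Fix integers $a_1,a_2,\ldots\ge2$, $d_0=1$, $d_i=a_1\cdots a_i$, $\widetilde\mu_n=\sum_{i=0}^n(-1)^{n-i}d_i$, $\mathbf{e}[\alpha]=\exp(2\pi\sqrt{-1}\alpha)$. $\chi^{(n)}$ is the $\widetilde\mu_n\times\widetilde\mu_n$ matrix $1/\varphi_n(N)$, where $N=(\delta_{i+1,j})$ is the nilpotent shift matrix and $\varphi_n(t)=\prod_{i=0}^n(1-t^{d_i})^{(-1)^{n-i}}$ for $n\ge1$, $\varphi_0(t)=1-t$ (expand $1/\varphi_n(t)$ as a power series in $t$ and substitute $N$). $p_n(t)=\prod_{i=1}^n(1-t^{d_{i-1}})^{(-1)^{n-i}}$ for $n\ge1$ and $p_0(t)=1$; $p_n$ is a polynomial. *)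

(* Defs.v *)
From HB Require Import structures.
From mathcomp Require Import all_boot all_order all_algebra.
From mathcomp Require Import reals trigo.
From mathcomp Require Import complex.
Set Implicit Arguments. Unset Strict Implicit. Unset Printing Implicit Defensive.
Import Order.TTheory GRing.Theory Num.Theory.
Local Open Scope ring_scope.

Definition dd (a : nat -> nat) (i : nat) : nat := (\prod_(1 <= k < i.+1) a k)%N.

Definition mut (a : nat -> nat) (n : nat) : int :=
  \sum_(i < n.+1) (-1) ^+ (n - i) * (dd a i)%:Z.

(* mu~_n as a natural number (it is positive under the hypotheses a_k >= 2) *)
Definition mu (a : nat -> nat) (n : nat) : nat := `|mut a n|%N.

Definition ps := nat -> int.
Definition ps_one : ps := fun k => (k == 0%N)%:Z.
Definition ps_mul (f g : ps) : ps := fun k => \sum_(m < k.+1) f m * g (k - m)%N.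
Definition ps_1mX (d : nat) : ps := fun k => (k == 0%N)%:Z - (k == d)%:Z.
(* the power series expansion of (1 - t^d)^(-1) = sum_k t^(d k)  (d >= 1) *)
Definition ps_geom (d : nat) : ps := fun k => (d %| k)%:Z.

(* power series expansion of 1/phi_n(t) = prod_{i=0}^n (1 - t^{d_i})^(-(-1)^(n-i)) *)
Definition inv_phi (a : nat -> nat) (n : nat) : ps :=
  \big[ps_mul/ps_one]_(i < n.+1)
     (if odd (n - i) then ps_1mX (dd a i) else ps_geom (dd a i)).

Definition shiftN (C : pzRingType) (m : nat) : 'M[C]_m :=
  \matrix_(i < m, j < m) ((i.+1 == j :> nat)%:R).

(* chi^(n) = 1/phi_n(N): substitute N into the power series; N^k = 0 for k >= mu~_n,
   so the substitution is the finite sum over k < mu~_n *)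
Definition chi (C : pzRingType) (a : nat -> nat) (n : nat) : 'M[C]_(mu a n) :=
  \sum_(k < mu a n) (inv_phi a n k)%:~R *: (shiftN C (mu a n)) ^+ k.

(* p_n(t) = prod_{i=1}^n (1 - t^{d_{i-1}})^((-1)^(n-i)), a polynomial:
   numerator (n-i even) divided (exactly) by denominator (n-i odd) *)
Definition p_num (F : fieldType) (a : nat -> nat) (n : nat) : {poly F} :=
  \prod_(1 <= i < n.+1 | ~~ odd (n - i)) (1 - 'X^(dd a i.-1)).
Definition p_den (F : fieldType) (a : nat -> nat) (n : nat) : {poly F} :=
  \prod_(1 <= i < n.+1 | odd (n - i)) (1 - 'X^(dd a i.-1)).
Definition pp (F : fieldType) (a : nat -> nat) (n : nat) : {poly F} :=
  p_num F a n %/ p_den F a n.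

Definition ee (R : realType) (x : R) : R[i] :=
  Complex (cos (2 * pi * x)) (sin (2 * pi * x)).

(* Main.v *)
Require Import Defs.
From HB Require Import structures.
From mathcomp Require Import all_boot all_order all_algebra.
From mathcomp Require Import reals trigo.
From mathcomp Require Import complex.
From mathcomp Require Import ring lra zify.
Import Order.TTheory GRing.Theory Num.Theory.
Local Open Scope ring_scope.
Set Implicit Arguments. Unset Strict Implicit.
Set Implicit Arguments. Unset Strict Implicit.
Section E.
Variable R : realType.
Lemma eeD (x y : R) : ee (x + y) = ee x * ee y.
Proof.
rewrite /ee !mulrDr cosD sinD.
rewrite [RHS]/GRing.mul /=. congr Complex; ring.
Qed.
Lemma ee0 : ee (0:R) = 1.
Proof. by rewrite /ee mulr0 cos0 sin0. Qed.
Lemma ee1 : ee (1:R) = 1.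
Proof. by rewrite /ee mulr1 mulr_natl cos2pi sin2pi. Qed.
Lemma eeMn (y : R) (b : nat) : ee (b%:R * y) = ee y ^+ b.
Proof.
elim: b => [|b IH]; first by rewrite mul0r ee0 expr0.
by rewrite -addn1 natrD mulrDl mul1r eeD IH addn1 exprSr.
Qed.
Lemma eeN (x : R) : ee (- x) = (ee x)^-1.
Proof.
have h : ee (- x) * ee x = 1 by rewrite -eeD addNr ee0.
have hx : ee x != 0.
  apply/eqP => e; move: h; rewrite e mulr0 => /eqP; by rewrite eq_sym oner_eq0.
by rewrite -[LHS]mulr1 -(mulfV hx) mulrA h mul1r.
Qed.
Lemma ee_int (s : int) : ee (s%:~R : R) = 1.
Proof.
case: s => m.
  by rewrite -[_%:~R]mulr1 eeMn ee1 expr1n.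
by rewrite NegzE mulrNz eeN -[_%:~R]mulr1 eeMn ee1 expr1n invr1.
Qed.
Lemma ee_ne1 (x : R) : 0 < x < 1 -> ee x != 1.
Proof.
move=> /andP[x0 x1]; apply/negP => /eqP [] hc hs.
have pi0 := @pi_gt0 R.
have [h|h|h] := ltgtP (2 * pi * x) pi.
- have : 0 < sin (2 * pi * x) by apply: sin_gt0_pi; apply/andP; split => //; nra.
  by rewrite hs ltxx.
- have : 0 < - sin (2 * pi * x).
    rewrite -[X in sin X](subrK pi) (sinDpi (2 * pi * x - pi)).
    rewrite opprK; apply: sin_gt0_pi.
    apply/andP; split; nra.
  by rewrite hs oppr0 ltxx.
- move: hc; rewrite h cospi => /eqP /eqP; lra.
Qed.

Lemma rootsum (D : nat) (s : int) : (0 < D)%N ->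
  \sum_(1 <= b < D.+1) ee ((b%:R / D%:R) * s%:~R : R) =
  if (D%:Z %| s)%Z then D%:R else 0.
Proof.
move=> D0.
have DR : (D%:R : R) != 0 by rewrite pnatr_eq0 -lt0n.
set w := ee (s%:~R / D%:R : R).
have ew b : ee ((b%:R / D%:R) * s%:~R : R) = w ^+ b.
  by rewrite -eeMn mulrAC mulrA.
under eq_bigr => b _ do rewrite ew.
case: ifP => hd.
  have -> : w = 1.
    case/dvdzP: hd => q hq; rewrite /w hq rmorphM /= -pmulrn mulfK //; exact: ee_int.
  by under eq_bigr => b _ do rewrite expr1n; rewrite sumr_const_nat subn1.
have wD : w ^+ D = 1.
  by rewrite /w -eeMn mulrC mulfVK // ee_int.
have w1 : w != 1.
  rewrite /w (divz_eq s D%:Z) rmorphD rmorphM /= -pmulrn mulrDl mulfK // eeD ee_int mul1r.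
  apply: ee_ne1.
  have r0 : 0 <= (s %% D%:Z)%Z by apply: modz_ge0; rewrite eqz_nat -lt0n.
  have rD : (s %% D%:Z < D%:Z)%Z by apply: ltz_pmod; lia.
  have rn0 : (s %% D%:Z)%Z != 0 by apply/negP => /eqP/dvdz_mod0P; rewrite hd.
  apply/andP; split.
    apply: divr_gt0; last by rewrite ltr0n.
    rewrite ltr0z lt_neqAle eq_sym rn0 r0 //.
  by rewrite ltr_pdivrMr ?ltr0n // mul1r [D%:R]pmulrn ltr_int.
rewrite big_add1 /= big_mkord.
have -> : \sum_(i < D) w ^+ i.+1 = w * \sum_(b < D) w ^+ b.
  rewrite mulr_sumr; apply: eq_bigr => b _; by rewrite exprS.
have : (w - 1) * \sum_(b < D) w ^+ b = 0 by rewrite -subrX1 wD subrr.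
by move/eqP; rewrite mulf_eq0 subr_eq0 (negbTE w1) /= => /eqP ->; rewrite mulr0.
Qed.
End E.
Section Arith.
Variable a : nat -> nat.
Hypothesis ha : forall k : nat, (1 <= k)%N -> (2 <= a k)%N.

Lemma ddS n : dd a n.+1 = (dd a n * a n.+1)%N.
Proof. by rewrite /dd big_nat_recr. Qed.

Lemma dd_gt0 n : (0 < dd a n)%N.
Proof.
elim: n => [|n IH]; first by rewrite /dd big_geq.
rewrite ddS muln_gt0 IH /=; have := @ha n.+1 isT; lia.
Qed.

Lemma dd_dvd n : (dd a n %| dd a n.+1)%N.
Proof. by rewrite ddS dvdn_mulr. Qed.

Lemma mutS n : mut a n.+1 = (dd a n.+1)%:Z - mut a n.
Proof.
rewrite /mut big_ord_recr /= subnn expr0 mul1r addrC; congr (_ + _).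
rewrite -sumrN; apply: eq_bigr => i _.
by rewrite subSn ?(leq_ord i) // exprS mulN1r mulNr.
Qed.

Lemma mut_bounds n : (1 <= mut a n)%R /\ (mut a n <= (dd a n)%:Z)%R.
Proof.
elim: n => [|n [IH1 IH2]].
  by rewrite /mut big_ord1 /dd big_geq.
rewrite mutS; have h2 : (2 * dd a n <= dd a n.+1)%N.
  by rewrite ddS mulnC leq_mul2l @ha ?orbT.
have := dd_gt0 n; lia.
Qed.

Lemma mu_mut n : ((mu a n)%:Z = mut a n).
Proof.
rewrite /mu gez0_abs //; have [h _] := mut_bounds n; lia.
Qed.
End Arith.

Section Poly.
Variable F : fieldType.
Variable a : nat -> nat.
Hypothesis ha : forall k : nat, (1 <= k)%N -> (2 <= a k)%N.

Definition Num n : {poly F} := \prod_(0 <= i < n | odd (n - i)) (1 - 'X^(dd a i)).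
Definition Den n : {poly F} := \prod_(0 <= i < n | ~~ odd (n - i)) (1 - 'X^(dd a i)).

Lemma nat_pred_eq (P Q : pred nat) (G : nat -> {poly F}) n :
  (forall i, (i < n)%N -> P i = Q i) ->
  \prod_(0 <= i < n | P i) G i = \prod_(0 <= i < n | Q i) G i.
Proof.
move=> H; rewrite big_nat_cond [RHS]big_nat_cond; apply: eq_bigl => i /=.
by case h: (i < n)%N => //=; rewrite H.
Qed.

Lemma NumS n : Num n.+1 = Den n * (1 - 'X^(dd a n)).
Proof.
rewrite /Num big_mkcond big_nat_recr //= subSnn /= -big_mkcond; congr (_ * _).
by apply: nat_pred_eq => i hi; rewrite subSn 1?ltnW.
Qed.

Lemma DenS n : Den n.+1 = Num n.
Proof.
rewrite /Den big_mkcond big_nat_recr //= subSnn /= mulr1 -big_mkcond.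
by apply: nat_pred_eq => i hi; rewrite subSn 1?ltnW //= negbK.
Qed.

Lemma p_num_Num n : p_num F a n = Num n.
Proof.
rewrite /p_num /Num big_add1 /=; apply: nat_pred_eq => i hi.
by rewrite -(subnSK hi) /=.
Qed.

Lemma p_den_Den n : p_den F a n = Den n.
Proof.
rewrite /p_den /Den big_add1 /=; apply: nat_pred_eq => i hi.
by rewrite -(subnSK hi) /= ?negbK.
Qed.

Lemma size_1mX d : (0 < d)%N -> size (1 - 'X^d : {poly F}) = d.+1.
Proof. by move=> d0; rewrite -opprB size_opp size_Xn_sub_1. Qed.

Lemma nz_1mX d : (0 < d)%N -> (1 - 'X^d : {poly F}) != 0.
Proof. by move=> d0; rewrite -size_poly_gt0 size_1mX. Qed.

Lemma dvd_1mX m l : (m %| l)%N -> (1 - 'X^m : {poly F}) %| (1 - 'X^l).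
Proof.
case/dvdnP => k ->; apply/dvdpP; exists (\sum_(i < k) ('X^m) ^+ i).
rewrite mulnC exprM -opprB subrX1 -mulNr opprB mulrC //.
Qed.

Lemma Den_nz n : Den n != 0.
Proof.
rewrite /Den; apply: (big_ind (fun p : {poly F} => p != 0)) => //.
- exact: oner_neq0.
- by move=> x y hx hy; rewrite mulf_neq0.
- by move=> i _; apply: nz_1mX; apply: (dd_gt0 ha).
Qed.

Lemma Qex n : exists Q : {poly F}, [/\ Num n = Q * Den n, Q %| 1 - 'X^(dd a n),
   Q != 0 & (size Q + mu a n = dd a n + 1)%N].
Proof.
elim: n => [|n [Q [hN hd hQ hs]]].
  exists 1; split.
  - by rewrite /Num /Den !big_geq // mulr1.
  - exact: dvd1p.
  - exact: oner_neq0.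
  - have := mu_mut ha 0; rewrite /mut big_ord1 /dd big_geq // size_poly1 /= subnn expr0 mul1r; lia.
case/dvdpP: hd => c hc.
have hc0 : c != 0.
  apply/eqP => c0; move: hc; rewrite c0 mul0r => /eqP; rewrite (negbTE (nz_1mX _)) //.
  exact: (dd_gt0 ha).
exists c; split => //.
- by rewrite NumS DenS hN hc; ring.
- apply: dvdp_trans (dvd_1mX (dd_dvd _ n)).
  by rewrite hc dvdp_mulIl.
- have hsz : size (c * Q) = (dd a n).+1 by rewrite -hc size_1mX // (dd_gt0 ha).
  rewrite size_mul // in hsz.
  have h1 := mu_mut ha n; have h2 := mu_mut ha n.+1; rewrite mutS in h2.
  have : (0 < size c)%N by rewrite size_poly_gt0.
  have : (0 < size Q)%N by rewrite size_poly_gt0.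
  move=> hq hcc; have e : (size c + size Q = (dd a n).+2)%N by rewrite -hsz prednK // addn_gt0 hq orbT.
  lia.
Qed.

Lemma pp_Q n Q : Num n = Q * Den n -> pp F a n = Q.
Proof. by move=> h; rewrite /pp p_num_Num p_den_Den h mulpK // Den_nz. Qed.
End Poly.

Section Series.
Variable F : fieldType.
Variable K : nat.

Definition eqK (p q : {poly F}) := forall k, (k < K)%N -> p`_k = q`_k.
Definition tr (f : ps) : {poly F} := \poly_(l < K) ((f l)%:~R).

Lemma eqK_refl p : eqK p p. Proof. by []. Qed.

Lemma eqK_mul p q r s : eqK p q -> eqK r s -> eqK (p * r) (q * s).
Proof.
move=> h1 h2 k hk; rewrite !coefM; apply: eq_bigr => j _.
have hj := ltn_ord j.
rewrite h1 ?h2 //; lia.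
Qed.

Lemma eqK_prod (I : Type) (r : seq I) (P : pred I) (G1 G2 : I -> {poly F}) :
  (forall i, P i -> eqK (G1 i) (G2 i)) ->
  eqK (\prod_(i <- r | P i) G1 i) (\prod_(i <- r | P i) G2 i).
Proof. by move=> h; apply: big_ind2 => //; apply: eqK_mul. Qed.

Lemma big_ps (I : Type) (r : seq I) (P : pred I) (G : I -> ps) k : (k < K)%N ->
  ((\big[ps_mul/ps_one]_(i <- r | P i) G i) k)%:~R =
  (\prod_(i <- r | P i) tr (G i))`_k.
Proof.
move: k; apply: (big_ind2 (fun (f : ps) (p : {poly F}) =>
   forall k, (k < K)%N -> (f k)%:~R = p`_k)).
- by move=> k _; rewrite /ps_one coef1 -pmulrn.
- move=> f1 p1 f2 p2 h1 h2 k hk; rewrite /ps_mul coefM.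
  rewrite rmorph_sum /=; apply: eq_bigr => j _; have hj := ltn_ord j.
  rewrite intrM h1 ?h2 //; lia.
- by move=> i _ k hk; rewrite /tr coef_poly hk.
Qed.

Lemma tr_1mX d : eqK (tr (ps_1mX d)) (1 - 'X^d).
Proof.
move=> k hk; rewrite /tr coef_poly hk coefB coef1 coefXn /ps_1mX intrB -!pmulrn //.
Qed.

Lemma geom_inv d : (0 < d)%N -> eqK ((1 - 'X^d) * tr (ps_geom d)) 1.
Proof.
move=> d0 k hk; rewrite mulrBl mul1r coefB coefXnM coef1 /tr !coef_poly hk.
case: ltnP => hkd.
  rewrite subr0 /ps_geom -pmulrn; congr (_%:R).
  case: k hk hkd => [|k] hk hkd /=; first by rewrite dvdn0.
  have : ~~ (d %| k.+1)%N by apply/negP => /(dvdn_leq (ltn0Sn k)); lia.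
  by move/negbTE ->.
have -> : (k - d < K)%N by lia.
rewrite /ps_geom -!pmulrn dvdn_subl // subrr.
have -> : (k == 0%N) = false by apply/negbTE; rewrite -lt0n; lia.
by [].
Qed.

Lemma shiftN_exp m k (i j : 'I_m) :
  ((shiftN F m) ^+ k) i j = ((i + k)%N == j)%:R.
Proof.
elim: k i => [|k IH] i.
  by rewrite expr0 mxE addn0.
rewrite exprS -mulmxE mxE.
under eq_bigr => l _ do rewrite IH /shiftN mxE.
case: (ltnP i.+1 m) => hi.
  rewrite (bigD1 (Ordinal hi)) //= eqxx mul1r big1 ?addr0.
    by rewrite addSnnS.
  move=> l hl; rewrite eq_sym.
  have -> : (l == i.+1 :> nat) = false.
    by apply/negbTE; apply: contra hl => /eqP h; apply/eqP/val_inj.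
  by rewrite mul0r.
rewrite big1 => [|l _]; last first.
  have -> : (i.+1 == l :> nat) = false by apply/negbTE; have := ltn_ord l; lia.
  by rewrite mul0r.
have -> : ((i + k.+1)%N == j) = false by apply/negbTE; have := ltn_ord j; lia.
by [].
Qed.

End Series.

Section Main.
Variable F : fieldType.
Variable a : nat -> nat.
Hypothesis ha : forall k : nat, (1 <= k)%N -> (2 <= a k)%N.

Lemma chi_entry n (i j : 'I_(mu a n)) :
  chi F a n i j = if (i <= j)%N then ((inv_phi a n (j - i)%N)%:~R : F) else 0.
Proof.
rewrite /chi summxE.
under eq_bigr => k _ do rewrite mxE shiftN_exp.
case: leqP => hij.
  have hk : (j - i < mu a n)%N by have := ltn_ord j; lia.
  rewrite (bigD1 (Ordinal hk)) //= big1 ?addr0.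
    by rewrite subnKC // eqxx mulr1.
  move=> l hl.
  have -> : ((i + l)%N == j) = false.
    apply/negbTE; apply: contra hl => /eqP h; apply/eqP/val_inj => /=; lia.
  by rewrite mulr0.
rewrite big1 // => l _.
have -> : ((i + l)%N == j) = false by apply/negbTE; lia.
by rewrite mulr0.
Qed.

Lemma inv_phi_coef K n Q k : Num F a n = Q * Den F a n -> (k < K)%N ->
  ((inv_phi a n k)%:~R : F) = (Q * tr F K (ps_geom (dd a n)))`_k.
Proof.
move=> hQ hk.
rewrite /inv_phi (big_ps (K := K) F _ _ _ hk).
set E := fun i : nat => if odd (n - i) then (1 - 'X^(dd a i)) else tr F K (ps_geom (dd a i)).
have e1 : eqK K (\prod_(i < n.+1) tr F K (if odd (n - i) then ps_1mX (dd a i) else ps_geom (dd a i)))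
                (\prod_(i < n.+1) E i).
  apply: eqK_prod => i _; rewrite /E; case: ifP => _; [exact: tr_1mX | by []].
rewrite e1 // -(big_mkord xpredT E) big_nat_recr //= {2}/E subnn /=.
rewrite (bigID (fun i => odd (n - i))) /=.
have -> : \prod_(0 <= i < n | odd (n - i)) E i = Num F a n.
  by apply: eq_bigr => i h; rewrite /E h.
have -> : \prod_(0 <= i < n | ~~ odd (n - i)) E i =
          \prod_(0 <= i < n | ~~ odd (n - i)) tr F K (ps_geom (dd a i)).
  by apply: eq_bigr => i h; rewrite /E (negbTE h).
rewrite hQ -(mulrA Q).
have hDG : eqK K (Den F a n * \prod_(0 <= i < n | ~~ odd (n - i)) tr F K (ps_geom (dd a i))) 1.
  rewrite /Den -big_split /=.
  have h1 : (1 : {poly F}) = \prod_(0 <= i < n | ~~ odd (n - i)) 1 by rewrite big1_eq.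
  rewrite [X in eqK K _ X]h1.
  apply: eqK_prod => i _; apply: geom_inv; exact: dd_gt0.
have := eqK_mul (eqK_mul (eqK_refl (K:=K) Q) hDG) (eqK_refl (K:=K) (tr F K (ps_geom (dd a n)))).
by rewrite mulr1 => ->.
Qed.
End Main.

Lemma aux_mx (R : realType) (y : R) (m : nat) (x : int) :
  m%:R * y + y * x%:~R = y * (m%:Z + x)%:~R.
Proof. by rewrite rmorphD /= mulrDr mulrC. Qed.

Lemma rhs_eq (R : realType) (Q : {poly R[i]}) (D : nat) (x : int) : (0 < D)%N ->
  (D%:R)^-1 * \sum_(1 <= b < D.+1) Q.[ee (b%:R / D%:R : R)] * ee ((b%:R / D%:R) * x%:~R : R)
  = \sum_(m < size Q) Q`_m * (if (D%:Z %| (m%:Z + x))%Z then 1 else 0).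
Proof.
move=> D0.
have DR : (D%:R : R[i]) != 0 by rewrite pnatr_eq0 -lt0n.
under eq_bigr => b _ do rewrite horner_coef mulr_suml.
rewrite exchange_big mulr_sumr /=; apply: eq_bigr => m _.
under eq_bigr => b _ do rewrite -mulrA -eeMn -eeD aux_mx.
rewrite -mulr_sumr.
rewrite rootsum //; case: ifP => _; last by rewrite !mulr0.
by rewrite mulr1 mulrCA mulVf // mulr1.
Qed.

Lemma sum_widen (C : ringType) (f : nat -> C) n1 n2 : (n1 <= n2)%N ->
  (forall m, (n1 <= m < n2)%N -> f m = 0) ->
  \sum_(m < n1) f m = \sum_(m < n2) f m.
Proof.
move=> h hz; rewrite -!(big_mkord xpredT) (big_cat_nat (leq0n n1) h) /=.
by rewrite [X in _ = _ + X]big1_seq ?addr0 // => m; rewrite mem_index_iota => /hz.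
Qed.

Lemma nodvd (D t : nat) : (0 < t < D)%N -> (D%:Z %| t%:Z)%Z = false.
Proof.
move=> /andP[t0 tD]; rewrite dvdzE /=; apply/negbTE/negP => /(dvdn_leq t0); lia.
Qed.

Lemma zeq1 (m i j : nat) : (j <= m + i)%N -> m%:Z + (i%:Z - j%:Z) = (m + i - j)%N%:Z.
Proof. by move=> h; rewrite addrA -PoszD subzn. Qed.

Lemma zeq2 (m i j : nat) : (m + i <= j)%N -> m%:Z + (i%:Z - j%:Z) = - ((j - i - m)%N%:Z).
Proof. by move=> h; rewrite -subnDA addnC -subzn // PoszD opprB addrA addrC addrA. Qed.

Unset Implicit Arguments. Set Strict Implicit.

Theorem lemma4p2 (R : realType) (a : nat -> nat)
  (ha : forall k : nat, (1 <= k)%N -> (2 <= a k)%N)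
  (n : nat) (i j : 'I_(mu a n)) :
  chi (R[i]) a n i j =
    ((dd a n)%:R)^-1 *
    \sum_(1 <= b < (dd a n).+1)
       (pp (R[i]) a n).[ee ((b%:R / (dd a n)%:R) : R)] *
       ee ((b%:R / (dd a n)%:R) * ((i : nat)%:R - (j : nat)%:R) : R).
Proof.
have D0 := dd_gt0 ha n.
have [Q [hN _ hQ0 hs]] := Qex (R[i]) ha n.
rewrite (pp_Q ha hN).
have -> : ((i : nat)%:R - (j : nat)%:R : R) = ((i : nat)%:Z - (j : nat)%:Z)%:~R.
  by rewrite rmorphB.
rewrite rhs_eq // chi_entry.
set S := size Q in hs *.
have hi := ltn_ord i; have hj := ltn_ord j.
case: leqP => hij; last first.
  rewrite big1 // => m _.
  have hm := ltn_ord m.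
  have -> : (m%:Z + ((i : nat)%:Z - (j : nat)%:Z)) = (m + i - j)%N%:Z.
    by rewrite zeq1 //; lia.
  by rewrite nodvd ?mulr0 //; apply/andP; split; lia.
have hk : (j - i < mu a n)%N by lia.
etransitivity; first exact: (inv_phi_coef _ hN hk).
rewrite coefM.
set g := fun m : nat => Q`_m * (if ((dd a n)%:Z %| (m%:Z + ((i : nat)%:Z - (j : nat)%:Z)))%Z then 1 else 0).
transitivity (\sum_(m < (j - i).+1) g m).
  apply: eq_bigr => m _; have hm := ltn_ord m.
  rewrite /tr coef_poly ifT; last by lia.
  rewrite /g /ps_geom.
  have -> : (m%:Z + ((i : nat)%:Z - (j : nat)%:Z)) = - ((j - i - m)%N%:Z) by rewrite zeq2 //; lia.
  rewrite dvdzE abszN /=.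
  by case: (dd a n %| _)%N.
rewrite (@sum_widen _ g (j - i).+1 ((j - i).+1 + size Q)) ?leq_addr //; last first.
  move=> m /andP[h1 h2]; rewrite /g.
  case: (leqP (size Q) m) => hmS; first by rewrite nth_default // mul0r.
  have -> : (m%:Z + ((i : nat)%:Z - (j : nat)%:Z)) = (m - (j - i))%N%:Z.
    by rewrite zeq1; [congr Posz|]; lia.
  by rewrite nodvd ?mulr0 //; lia.
rewrite [RHS](@sum_widen _ g (size Q) ((j - i).+1 + size Q)) ?leq_addl //.
by move=> m /andP[h1 h2]; rewrite /g nth_default // mul0r.
Qed.
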